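(* In the setting of the context, assume (G1), (G2') and ($\overline G{}_3'$), and let $\tilde\rho$ be a metric on $X$ inducing its topology, with constants $\gamma\ge1$, $C\ge1$ such that $C^{-1}\tilde\rho(x,y)^{-\gamma}\le\tilde G(x,y)\le C\tilde\rho(x,y)^{-\gamma}$ for all $x,y$. Then there exists $\tilde c_2\ge1$ such that $$\widetilde{\operatorname{cap}}\,\tilde U(x,r)\ \ge\ \tilde c_2^{-1}\,r^{\gamma}\qquad\text{for all }x\in X_0,\ 0<r<\tilde R_0(x).$$
   Context: $(X,\rho)$ separable metric space, $X_0\subsetneq X$ open. $\mathcal M(X)$ finite Borel measures (extended to universally measurable sets), $\|\mu\|=\mu(X)$. For every open $U\subseteq X$ and $x\in X$ a measure $\mu_x^U\in\mathcal M(X)$ is given such that for all open $U,V$ and $x$: $\mu_x^U(U)=0$, $\|\mu_x^U\|\le1$, $\mu_x^U=\varepsilon_x$ (Dirac) if $x\notin U$; $y\mapsto\mu_y^U(E)$ universally measurable for Borel $E$; $\mu_x^U=\int\mu_y^U\,d\mu_x^V(y)$ if $V\subseteq U$. For closed $A$, $\varepsilon_x^A:=\mu_x^{X\setminus A}$. $\mathcal U(X_0)$: open $U$ with $\overline U\subseteq X_0$. $G\colon X\times X\to(0,\infty]$ Borel, $G\nu(x)=\int G(x,y)d\nu(y)$; $V(x,s):=\{y:G(y,x)^{-1}<s\}$; $S_0(x):=\sup\{s>0:\overline{V(x,s)}\subseteq X_0\}$. $\tilde U(x,r):=\{y:\tilde\rho(x,y)<r\}$, $\tilde R_0(x):=\sup\{r>0:\overline{\tilde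 U(x,r)}\subseteq X_0\}$. For universally measurable $A$, $\widetilde{\operatorname{cap}}A:=\sup\{\|\mu\|:\mu\in\mathcal M(X),\ \mu(X\setminus A)=0,\ \int\tilde G(\cdot,y)\,d\mu(y)\le1\}$. (G1): there is $c_1\ge1$ such that for all $U\in\mathcal U(X_0)$, $x\in U$, $\delta>0$, closed $A\subseteq U$ there are a closed neighborhood $B\subseteq U$ of $A$ and a measure $\nu$ carried by $B$ with $\|\varepsilon_x^B\|-\delta<c_1\|\varepsilon_x^A\|$ and $\|\varepsilon_y^A\|\le G\nu(y)\le c_1\|\varepsilon_y^B\|$ for all $y$. (G2'): for every $x$, $G(x,x)=\lim_{y\to x}G(y,x)=\infty$; there is a Borel $w$ with $0<w\le1$ and $\int w\,d\mu_x^U\le w(x)$ for all open $U$, $x$; there is $\tilde c>1$ with $\tilde G(x,z)\wedge\tilde G(y,z)\le\tilde c\tilde G(x,y)$ for all $x,y,z$, where $\tilde G(x,y):=G(x,y)/(w(x)w(y))$; $\lambda:=\inf w(X_0)>0$; for each $x$ and neighborhood $V$ of $x$, $G(\cdot,x)/w$ is bounded on $X\setminus V$. ($\overline G{}_3'$): there is $c_3\ge1$ with $\|\varepsilon_y^{\overline{V(x,s)}}\|\ge c_3^{-1}sG(y,x)$ for all $x\in X_0$, $0<s<S_0(x)$, $y\in X\setminus V(x,s)$. *)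

(* Defs.v *)
From HB Require Import structures.
From mathcomp Require Import all_boot all_order all_algebra.
From mathcomp Require Import all_classical all_reals all_analysis.
From mathcomp Require Import measurable_realfun.
Set Implicit Arguments. Unset Strict Implicit. Unset Printing Implicit Defensive.
Import Order.TTheory GRing.Theory Num.Theory.
Local Open Scope classical_set_scope.
Local Open Scope ring_scope.

Section MetricDefs.
Context {R : realType} {T : Type}.

Definition is_metric (rho : T -> T -> R) : Prop :=
  [/\ forall x y, 0 <= rho x y,
      forall x y, rho x y = 0 <-> x = y,
      forall x y, rho x y = rho y x &
      forall x y z, rho x z <= rho x y + rho y z].

Definition mball (rho : T -> T -> R) (x : T) (r : R) : set T :=
  [set y | rho x y < r].

Definition mopen (rho : T -> T -> R) (U : set T) : Prop :=
  forall x, U x -> exists2 e : R, 0 < e & mball rho x e `<=` U.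

Definition mclosure (rho : T -> T -> R) (A : set T) : set T :=
  [set x | forall e : R, 0 < e -> exists2 a, A a & rho x a < e].

Definition mclosed (rho : T -> T -> R) (A : set T) : Prop :=
  mclosure rho A `<=` A.

Definition minterior (rho : T -> T -> R) (A : set T) : set T :=
  [set x | exists2 e : R, 0 < e & mball rho x e `<=` A].

Definition mseparable (rho : T -> T -> R) : Prop :=
  exists D : set T, countable D /\
    forall x (e : R), 0 < e -> exists2 d, D d & rho x d < e.

Definition UX0 (rho : T -> T -> R) (X0 U : set T) : Prop :=
  mopen rho U /\ mclosure rho U `<=` X0.

End MetricDefs.

Notation XB rho := (g_sigma_algebraType (mopen rho)).

Local Open Scope ereal_scope.

Section MeasDefs.
Context {R : realType} {T : pointedType} (rho : T -> T -> R).

Definition mass (nu : {finite_measure set XB rho -> \bar R}) : \bar R := nu setT.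

(** universal measurability of a function: measurable w.r.t. the completion
    (Caratheodory extension) of every finite Borel measure *)
Definition umeas_fun (f : T -> \bar R) : Prop :=
  forall nu : {finite_measure set XB rho -> \bar R},
    measurable_fun [set: caratheodory_type (nu^*)%mu] f.


Definition cint (nu : {finite_measure set XB rho -> \bar R}) (f : T -> \bar R)
  : \bar R := \int[@completed_measure_extension _ _ _ nu]_y f y.

Definition kernel_family
  (mu : set T -> T -> {finite_measure set XB rho -> \bar R}) : Prop :=
  forall (U : set T) (x : T), mopen rho U ->
    [/\ mu U x U = 0,
        mass (mu U x) <= 1,
        (~ U x -> forall E : set (XB rho), measurable E -> mu U x E = @dirac _ (XB rho) x R E),
        (forall E : set (XB rho), measurable E -> umeas_fun (fun y => mu U y E)) &
        (forall V : set T, mopen rho V -> V `<=` U ->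
           forall E : set (XB rho), measurable E ->
             mu U x E = cint (mu V x) (fun y => mu U y E))].

Definition eps (mu : set T -> T -> {finite_measure set XB rho -> \bar R})
  (A : set T) (x : T) := mu (~` A) x.

Definition Gpot (G : T -> T -> \bar R) (nu : {finite_measure set XB rho -> \bar R})
  (x : T) : \bar R := \int[nu]_y G x y.

End MeasDefs.

Section GDefs.
Context {R : realType} {T : Type}.

(** inverse on (0, +oo], with +oo^-1 = 0 *)
Definition einv (e : \bar R) : \bar R :=
  match e with
  | r%:E => (r^-1)%:E
  | _ => 0
  end.

Definition Gt (G : T -> T -> \bar R) (w : T -> R) (x y : T) : \bar R :=
  G x y * ((w x * w y)^-1)%:E.

Definition Vset (G : T -> T -> \bar R) (x : T) (s : R) : set T :=
  [set y | einv (G y x) < s%:E].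

Definition S0 (rho : T -> T -> R) (G : T -> T -> \bar R) (X0 : set T) (x : T)
  : \bar R :=
  ereal_sup [set s%:E | s in [set s : R | (0 < s)%R /\
                                 mclosure rho (Vset G x s) `<=` X0]].

Definition R0t (rhot : T -> T -> R) (X0 : set T) (x : T) : \bar R :=
  ereal_sup [set r%:E | r in [set r : R | (0 < r)%R /\
                                 mclosure rhot (mball rhot x r) `<=` X0]].

Definition rpowneg (d gam : R) : \bar R :=
  if d == 0%R then +oo else (d `^ (- gam))%:E.

End GDefs.

Section Hyps.
Context {R : realType} {T : pointedType} (rho : T -> T -> R).

Definition G1 (mu : set T -> T -> {finite_measure set XB rho -> \bar R})
  (G : T -> T -> \bar R) (X0 : set T) : Prop :=
  exists c1 : R, (1 <= c1)%R /\
    forall (U : set T) (x : T) (delta : R) (A : set T),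
      UX0 rho X0 U -> U x -> (0 < delta)%R -> mclosed rho A -> A `<=` U ->
      exists (B : set T) (nu : {finite_measure set XB rho -> \bar R}),
        [/\ mclosed rho B, A `<=` minterior rho B, B `<=` U,
            nu (~` B) = 0 &
            mass (eps mu B x) - delta%:E < c1%:E * mass (eps mu A x)] /\
            (forall y, mass (eps mu A y) <= Gpot G nu y /\
                      Gpot G nu y <= c1%:E * mass (eps mu B y)).

Definition G2' (mu : set T -> T -> {finite_measure set XB rho -> \bar R})
  (G : T -> T -> \bar R) (w : T -> R) (X0 : set T) : Prop :=
  [/\ (forall x, G x x = +oo) /\
      (forall x (M : R), exists2 e : R, (0 < e)%R &
          forall y, (rho y x < e)%R -> M%:E < G y x),
      measurable_fun [set: XB rho] w /\ (forall x, (0 < w x <= 1)%R),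
      (forall (U : set T) (x : T), mopen rho U ->
          \int[mu U x]_y (w y)%:E <= (w x)%:E),
      (exists ct : R, (1 < ct)%R /\
          forall x y z, Order.min (Gt G w x z) (Gt G w y z) <= ct%:E * Gt G w x y) /\
      (exists2 lam : R, (0 < lam)%R & forall x, X0 x -> (lam <= w x)%R) &
      (forall x (V : set T), minterior rho V x ->
          exists M : R, forall y, ~ V y -> G y x * ((w y)^-1)%:E <= M%:E)].

Definition G3bar' (mu : set T -> T -> {finite_measure set XB rho -> \bar R})
  (G : T -> T -> \bar R) (X0 : set T) : Prop :=
  exists c3 : R, (1 <= c3)%R /\
    forall (x : T) (s : R) (y : T),
      X0 x -> (0 < s)%R -> s%:E < S0 rho G X0 x -> ~ Vset G x s y ->
      (c3^-1 * s)%:E * G y x <= mass (eps mu (mclosure rho (Vset G x s)) y).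

Definition capt (G : T -> T -> \bar R) (w : T -> R) (A : set T) : \bar R :=
  ereal_sup [set mass nu | nu in
    [set nu : {finite_measure set XB rho -> \bar R} |
       nu (~` A) = 0 /\ forall x, \int[nu]_y Gt G w x y <= 1]].

End Hyps.

(* Main.v *)
Require Import Defs.
From HB Require Import structures.
From mathcomp Require Import all_boot all_order all_algebra.
From mathcomp Require Import all_classical all_reals all_analysis.
From mathcomp Require Import measurable_realfun.
From mathcomp Require Import ring lra.
Import Order.TTheory GRing.Theory Num.Theory.
Local Open Scope classical_set_scope.
Local Open Scope ring_scope.

Lemma mball_open {R : realType} {T : Type} {r : T -> T -> R} x e :
  is_metric r -> mopen r (mball r x e).
Proof.
case=> r0 r00 rC rT y; rewrite /mball/= => ye.
exists (e - r x y); first by rewrite subr_gt0.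
move=> z; rewrite /mball/= => hz.
have := rT x y z; move=> h; apply: (le_lt_trans h); by rewrite -ltrBrDl.
Qed.

Lemma mclosure_sub {R : realType} {T : Type} {r : T -> T -> R} A :
  is_metric r -> A `<=` mclosure r A.
Proof.
case=> r0 r00 rC rT y Ay e e0; exists y => //.
by have [_ ->] := r00 y y.
Qed.

Lemma mclosureS {R : realType} {T : Type} {r : T -> T -> R} A B :
  A `<=` B -> mclosure r A `<=` mclosure r B.
Proof. by move=> AB y hy e e0; have [a Aa ha] := hy e e0; exists a => //; apply: AB. Qed.

Lemma mclosure_ball {R : realType} {T : Type} {r : T -> T -> R} x e :
  is_metric r -> mclosure r (mball r x e) `<=` [set y | r x y <= e].
Proof.
case=> r0 r00 rC rT y hy /=; apply/ler_addgt0Pr => d d0.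
have [a] := hy d d0; rewrite /mball/= => ha hya.
apply: (le_trans (rT x a y)); rewrite (rC a y).
by apply: lerD; apply: ltW.
Qed.

Lemma mclosure_closed {R : realType} {T : Type} {r : T -> T -> R} A :
  is_metric r -> mclosed r (mclosure r A).
Proof.
case=> r0 r00 rC rT y hy e e0.
have [a ha hya] := hy (e/2) (divr_gt0 e0 (ltr0Sn _ 1)).
have [b Ab hab] := ha (e/2) (divr_gt0 e0 (ltr0Sn _ 1)).
exists b => //; apply: (le_lt_trans (rT y a b)).
by rewrite (splitr e); apply: ltrD.
Qed.

Lemma mclosure_compare {R : realType} {T : Type} {r r' : T -> T -> R} A :
  is_metric r' -> (forall U, mopen r' U -> mopen r U) ->
  mclosure r A `<=` mclosure r' A.
Proof.
move=> m' h y hy e e0.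
have hy0 : mball r' y e y by case: m' => _ r00 _ _; rewrite /mball/= (proj2 (r00 y y)).
have [d d0 hd] := h _ (mball_open y e m') y hy0.
have [a Aa ha] := hy d d0; exists a => //; exact: hd.
Qed.

Lemma mclosed_openC {R : realType} {T : Type} {r : T -> T -> R} {A} :
  mclosed r A -> mopen r (~` A).
Proof.
move=> cA y nAy; apply: contrapT => hn; apply: nAy; apply: cA => e e0.
apply: contrapT => hne; apply: hn; exists e => // z; rewrite /mball/= => hz Az.
by apply: hne; exists z.
Qed.

Lemma mopen_meas {R : realType} {T : pointedType} {rho : T -> T -> R} (U : set T) :
  mopen rho U -> @measurable _ (XB rho) U.
Proof. by move=> h; apply: sub_sigma_algebra. Qed.
Local Open Scope ereal_scope.

Lemma ae_le (R : realType) (T : pointedType) (rho : T -> T -> R)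
  (nu : {finite_measure set XB rho -> \bar R}) (B : set T) (f1 f2 : T -> \bar R) :
  @measurable _ (XB rho) B -> nu (~` B) = 0 ->
  measurable_fun [set: XB rho] f1 -> measurable_fun [set: XB rho] f2 ->
  (forall y, 0 <= f1 y) -> (forall y, 0 <= f2 y) ->
  (forall y, B y -> f1 y <= f2 y) ->
  \int[nu]_y f1 y <= \int[nu]_y f2 y.
Proof.
move=> mB nB m1 m2 p1 p2 h.
apply: ae_ge0_le_integral => //.
exists (~` B); split => //; first exact: measurableC.
move=> y /= hy By; apply: hy => _; exact: h.
Qed.
Arguments ae_le {R T rho nu B f1 f2}.

Lemma ae_le_cst (R : realType) (T : pointedType) (rho : T -> T -> R)
  (nu : {finite_measure set XB rho -> \bar R}) (B : set T) (f : T -> \bar R) (c : R) :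
  @measurable _ (XB rho) B -> nu (~` B) = 0 ->
  measurable_fun [set: XB rho] f -> (forall y, 0 <= f y) -> (0 <= c)%R ->
  (forall y, B y -> f y <= c%:E) ->
  \int[nu]_y f y <= c%:E * nu setT.
Proof.
move=> mB nB mf p1 c0 h.
rewrite -(integral_cst nu measurableT).
apply: (ae_le mB nB) => //.
Qed.

Lemma ae_ge_cst (R : realType) (T : pointedType) (rho : T -> T -> R)
  (nu : {finite_measure set XB rho -> \bar R}) (B : set T) (f : T -> \bar R) (c : R) :
  @measurable _ (XB rho) B -> nu (~` B) = 0 ->
  measurable_fun [set: XB rho] f -> (forall y, 0 <= f y) -> (0 <= c)%R ->
  (forall y, B y -> c%:E <= f y) ->
  c%:E * nu setT <= \int[nu]_y f y.
Proof.
move=> mB nB mf p1 c0 h.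
rewrite -(integral_cst nu measurableT).
apply: (ae_le mB nB) => //.
Qed.
Arguments ae_le_cst {R T rho nu B f c}.
Arguments ae_ge_cst {R T rho nu B f c}.

Lemma eps_mass_le (R : realType) (T : pointedType) (rho : T -> T -> R)
  (mu : set T -> T -> {finite_measure set XB rho -> \bar R}) (w : T -> R)
  (X0 : set T) (lam : R) (B : set T) (z : T) :
  kernel_family mu -> mclosed rho B -> B `<=` X0 -> (0 < lam)%R ->
  (forall x, X0 x -> (lam <= w x)%R) -> measurable_fun [set: XB rho] w ->
  (forall x, (0 < w x)%R) ->
  (forall U x, mopen rho U -> \int[mu U x]_y (w y)%:E <= (w x)%:E) ->
  mass (eps mu B z) <= ((w z) / lam)%:E.
Proof.
move=> kmu Bcl BX lam0 hlam mw w0 wexc.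
have oB := mclosed_openC Bcl.
have [h0 _ _ _ _] := kmu (~` B) z oB.
have mB : @measurable _ (XB rho) B.
  by rewrite -(setCK B); apply: measurableC; apply: sub_sigma_algebra.
have h0' : mu (~` B) z (~` B) = 0 by [].
have := @ae_ge_cst _ _ _ (mu (~` B) z) B (fun y => (w y)%:E) lam mB h0'.
move=> /(_ ltac:(exact/measurable_EFinP) ltac:(move=> y; rewrite lee_fin ltW //) (ltW lam0)).
move=> /(_ ltac:(move=> y By; rewrite lee_fin; exact: hlam (BX _ By))).
move=> h; have := le_trans h (wexc _ z oB).
rewrite /mass /eps.
have fM : mu (~` B) z setT \is a fin_num by apply: fin_num_measure.
rewrite -(fineK fM) -EFinM !lee_fin => hh.
by rewrite ler_pdivlMr // mulrC.
Qed.

Lemma Vset_sub (R : realType) (T : Type) (G : T -> T -> \bar R) (w : T -> R)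
  (rhot : T -> T -> R) (gam C : R) (x : T) (sig tau : R) :
  is_metric rhot -> (forall x y, 0 < G x y) -> (forall x, (0 < w x <= 1)%R) ->
  (1 <= gam)%R -> (0 < C)%R -> (0 < sig)%R -> (0 < tau)%R -> (C * sig <= tau `^ gam)%R ->
  (forall y x, Gt G w y x <= C%:E * rpowneg (rhot y x) gam) ->
  Vset G x sig `<=` mball rhot x tau.
Proof.
move=> [r0 r00 rC rT] G0 w01 g1 C0 s0 t0 hst hG y.
rewrite /Vset /mball /= rC.
have [->|dn0] := eqVneq (rhot y x) 0%R; first by [].
have d0 : (0 < rhot y x)%R by rewrite lt0r dn0 r0.
have := hG y x; rewrite /rpowneg (negbTE dn0) /Gt.
have /andP[wy0 wy1] := w01 y; have /andP[wx0 wx1] := w01 x.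
have ww0 : (0 < w y * w x)%R by rewrite mulr_gt0.
have := G0 y x.
case: (G y x) => [g| |] //=; last first.
  by rewrite gt0_mulye ?lte_fin ?invr_gt0 // leye_eq -EFinM.
rewrite lte_fin => g0; rewrite -!EFinM !lee_fin !lte_fin => hg hgs.
rewrite ltNge; apply/negP => tle.
have h1 : (tau `^ gam <= rhot y x `^ gam)%R.
  apply: ge0_ler_powR => //; first by rewrite (le_trans _ g1).
  - by rewrite nnegrE ltW.
  - by rewrite nnegrE ltW.
have h2 : (g <= g * (w y * w x)^-1)%R.
  by rewrite ler_pMr // invf_ge1 // mulr_ile1 // ltW.
have h3 : (g <= C * (rhot y x `^ gam)^-1)%R by rewrite -powRN; apply: le_trans h2 hg.
have pg : (0 < rhot y x `^ gam)%R by apply: powR_gt0.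
have h4 : (g * rhot y x `^ gam <= C)%R by rewrite -ler_pdivlMr.
have e1 : (1 < sig * g)%R by move: hgs; rewrite -[(g^-1)%R]mul1r ltr_pdivrMr.
have e2 := le_trans hst h1.
nra.
Qed.

Lemma Gyz_bound (R : realType) (T : Type) (G : T -> T -> \bar R) (w : T -> R)
  (rhot : T -> T -> R) (gam C ct lam r t g : R) (x y0 z : T) :
  is_metric rhot -> (forall x y, 0 < G x y) -> (forall x, (0 < w x <= 1)%R) ->
  (1 <= gam)%R -> (1 <= C)%R -> (1 < ct)%R -> (0 < lam)%R -> (lam <= w x)%R ->
  (forall x y z, Order.min (Gt G w x z) (Gt G w y z) <= ct%:E * Gt G w x y) ->
  (forall x y, ((C^-1)%:E * rpowneg (rhot x y) gam <= Gt G w x y) /\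
               (Gt G w x y <= C%:E * rpowneg (rhot x y) gam)) ->
  (0 < r)%R -> (0 < t)%R -> (ct * C ^+ 2 * r `^ (- gam) <= t `^ (- gam))%R ->
  (r <= rhot y0 x)%R -> (rhot x z < t)%R -> G y0 x = g%:E ->
  G y0 z <= (ct * g / lam)%:E.
Proof.
move=> [r0 r00 rC rT] G0 w01 g1 C1 ct1 lam0 lamx Hct hbd r_0 t0 hrt ry0 hz hg.
have C0 : (0 < C)%R by rewrite (lt_le_trans ltr01).
have ct0 : (0 < ct)%R by rewrite (lt_trans ltr01).
have gam0 : (0 < gam)%R by rewrite (lt_le_trans ltr01).
have /andP[wy0 wy1] := w01 y0; have /andP[wx0 wx1] := w01 x; have /andP[wz0 wz1] := w01 z.
have g0 : (0 < g)%R by rewrite -lte_fin -hg.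
have hy0x : Gt G w y0 x = (g / (w y0 * w x))%:E by rewrite /Gt hg -EFinM.
have rho0 : (0 < rhot y0 x)%R by rewrite (lt_le_trans r_0).
have Hup : (g / (w y0 * w x) <= C * r `^ (- gam))%R.
  have := proj2 (hbd y0 x); rewrite hy0x /rpowneg gt_eqF // -EFinM lee_fin => h.
  apply: (le_trans h); rewrite ler_pM2l // !powRN lef_pV2 ?posrE ?powR_gt0 //.
  by apply: ge0_ler_powR => //; [exact: ltW|rewrite nnegrE ltW|rewrite nnegrE ltW].
have Hstr : ct%:E * Gt G w y0 x < Gt G w x z.
  apply: (lt_le_trans _ (proj1 (hbd x z))); rewrite hy0x -EFinM /rpowneg.
  case: ifPn => [_|dn0].
    by rewrite gt0_muley ?lte_fin ?invr_gt0 // ltry.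
  rewrite -EFinM lte_fin.
  have d0 : (0 < rhot x z)%R by rewrite lt0r dn0 r0.
  have hd : (t `^ (- gam) < rhot x z `^ (- gam))%R.
    rewrite !powRN ltf_pV2 ?posrE ?powR_gt0 //.
    apply: gt0_ltr_powR; rewrite ?nnegrE ?ltW //.
  have e1 : (ct * (g / (w y0 * w x)) <= ct * (C * r `^ (- gam)))%R by rewrite ler_pM2l.
  apply: (le_lt_trans e1).
  have e2 : (ct * (C * r `^ (- gam)) = C^-1 * (ct * C ^+ 2 * r `^ (- gam)))%R.
    by field; rewrite gt_eqF.
  rewrite e2 ltr_pM2l ?invr_gt0 //; exact: le_lt_trans hrt hd.
have Hc : Gt G w y0 z <= ct%:E * Gt G w y0 x.
  have := Hct y0 x z; rewrite /Order.min.
  case: ifP => // _ h; exfalso.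
  have := le_lt_trans h Hstr; by rewrite ltxx.
move: Hc; rewrite hy0x -EFinM /Gt.
have := G0 y0 z; case: (G y0 z) => [h| |] //=; last first.
  by rewrite gt0_mulye ?lte_fin ?invr_gt0 ?mulr_gt0 // leye_eq.
rewrite lte_fin => h0; rewrite -EFinM !lee_fin => hh.
have ww : (0 < w y0 * w z)%R by rewrite mulr_gt0.
have : (h <= ct * (g / (w y0 * w x)) * (w y0 * w z))%R.
  by rewrite -ler_pdivrMr.
move=> hh2; apply: (le_trans hh2).
have -> : (ct * (g / (w y0 * w x)) * (w y0 * w z) = ct * g * (w z / w x))%R.
  by field; rewrite !gt_eqF.
rewrite ler_pM2l ?mulr_gt0 //.
apply: (@le_trans _ _ (w x)^-1%R).
  by rewrite ler_pdivrMr // mulVf ?gt_eqF.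
by rewrite lef_pV2 ?posrE.
Qed.

Lemma Gsec_meas (R : realType) (T : pointedType) (rho : T -> T -> R) (G : T -> T -> \bar R) z :
  measurable_fun [set: (XB rho * XB rho)%type] (fun p => G p.1 p.2) ->
  measurable_fun [set: XB rho] (fun y => G z y).
Proof.
move=> mG; have h := measurableT_comp mG (@pair1_measurable _ _ (XB rho) (XB rho) z). exact: h.
Qed.

Lemma Gt_meas (R : realType) (T : pointedType) (rho : T -> T -> R) (G : T -> T -> \bar R)
  (w : T -> R) z :
  measurable_fun [set: (XB rho * XB rho)%type] (fun p => G p.1 p.2) ->
  measurable_fun [set: XB rho] w -> (forall x, (0 < w x)%R) ->
  measurable_fun [set: XB rho] (fun y => Gt G w z y).
Proof.
move=> mG mw w0; rewrite /Gt.
apply: emeasurable_funM; first exact: Gsec_meas.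
apply/measurable_EFinP.
have -> : (fun y => (w z * w y)^-1)%R = (fun y => (w z * w y) `^ (-1))%R.
  by apply/funext => y; rewrite powR_inv1 // mulr_ge0 // ltW.
apply: (measurableT_comp (measurable_powR _)).
apply: measurable_funM => //; exact: measurable_cst.
Qed.

Lemma Gc_ge0 (R : realType) (T : Type) (G : T -> T -> \bar R) z y (c : R) :
  (forall x y, (0 < G x y)%E) -> (0 <= c)%R -> (0 <= G z y * c%:E)%E.
Proof. by move=> G0 c0; apply: mule_ge0; [exact: ltW|rewrite lee_fin]. Qed.

Lemma Gt_ge0 (R : realType) (T : Type) (G : T -> T -> \bar R) (w : T -> R) z y :
  (forall x y, (0 < G x y)%E) -> (forall x, (0 < w x)%R) -> (0 <= Gt G w z y)%E.
Proof.
move=> G0 w0; apply: Gc_ge0 => //; rewrite invr_ge0 mulr_ge0 //; exact: ltW.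
Qed.

Local Close Scope ereal_scope.

Theorem corollary7p5 (R : realType) (T : pointedType) (rho : T -> T -> R)
  (X0 : set T) (mu : set T -> T -> {finite_measure set XB rho -> \bar R})
  (G : T -> T -> \bar R) (w : T -> R) (rhot : T -> T -> R) (gam C : R) :
  is_metric rho -> mseparable rho ->
  mopen rho X0 -> X0 <> setT ->
  kernel_family mu ->
  (forall x y, (0 < G x y)%E) ->
  measurable_fun [set: (XB rho * XB rho)%type] (fun p => G p.1 p.2) ->
  G1 mu G X0 -> G2' mu G w X0 -> G3bar' mu G X0 ->
  is_metric rhot -> (forall U : set T, mopen rho U <-> mopen rhot U) ->
  1 <= gam -> 1 <= C ->
  (forall x y, ((C^-1)%:E * rpowneg (rhot x y) gam <= Gt G w x y)%E /\
               (Gt G w x y <= C%:E * rpowneg (rhot x y) gam)%E) ->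
  exists c2 : R, 1 <= c2 /\
    forall (x : T) (r : R), X0 x -> 0 < r -> (r%:E < R0t rhot X0 x)%E ->
      ((c2^-1 * r `^ gam)%:E <= capt rho G w (mball rhot x r))%E.
Proof.
move=> mrho sep oX0 X0nT kmu G0 mG [c1 [c11 HG1]] HG2 [c3 [c31 HG3]] mrhot hopen g1 C1 hbd.
case: HG2 => [[Gxx Glim] [mw w01] wexc [[ct [ct1 Hct]] [lam lam0 Hlam]] _].
have C0 : 0 < C by rewrite (lt_le_trans ltr01).
have ct0 : 0 < ct by rewrite (lt_trans ltr01).
have c10 : 0 < c1 by rewrite (lt_le_trans ltr01).
have c30 : 0 < c3 by rewrite (lt_le_trans ltr01).
have gam0 : 0 < gam by rewrite (lt_le_trans ltr01).
have w0 : forall x, 0 < w x by move=> x; have /andP[] := w01 x.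
set k := (ct * C ^+ 2)^-1.
have k0 : 0 < k by rewrite invr_gt0 mulr_gt0 // exprn_gt0.
have k1 : k <= 1.
  rewrite invf_le1 ?mulr_gt0 ?exprn_gt0 //.
  rewrite expr2; nra.
set kk := k / 2.
have kk0 : 0 < kk by rewrite divr_gt0.
set K0 := lam ^+ 3 * kk `^ gam / (2 * C * c1 * c3 * ct).
have K00 : 0 < K0 by rewrite divr_gt0 ?mulr_gt0 ?exprn_gt0 ?powR_gt0.
exists (Num.max 1 K0^-1); split; first by rewrite le_max lexx.
move=> x r hx r0 hrR.
have [_ [r' [r'0 hcl] <-]] := ereal_sup_gt hrR.
rewrite lte_fin => hrr'.
have ballr' : mball rhot x r' `<=` X0 by move=> y hy; apply: hcl; exact: mclosure_sub.
have [y0 ny0] : exists y0, ~ X0 y0.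
  apply: contrapT => h; apply: X0nT; apply/seteqP; split => // y _.
  by apply: contrapT => hy; apply: h; exists y.
have hy0r : r' <= rhot x y0.
  by rewrite leNgt; apply/negP => h; apply: ny0; apply: ballr'.
set t := k * r.
have t0 : 0 < t by rewrite mulr_gt0.
have tr : t <= r by rewrite /t ler_piMl // ltW.
have hrt : ct * C ^+ 2 * r `^ (- gam) <= t `^ (- gam).
  rewrite /t (powRM _ (ltW k0) (ltW r0)) ler_pM2r ?powR_gt0 // powRN.
  have kg : k `^ gam <= k by apply: ge1r_powR => //; rewrite k0.
  have -> : ct * C ^+ 2 = k^-1 by rewrite /k invrK.
  by rewrite lef_pV2 ?posrE ?powR_gt0.
set s := (t / 2) `^ gam / (2 * C).
have s0 : 0 < s by rewrite divr_gt0 ?mulr_gt0 ?powR_gt0 ?divr_gt0.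
have V2 : Vset G x (2 * s) `<=` mball rhot x (t / 2).
  apply: (@Vset_sub _ _ G w rhot gam C x (2 * s) (t / 2) mrhot G0 w01 g1 C0) => //.
  - by rewrite mulr_gt0.
  - by rewrite divr_gt0.
  - rewrite le_eqVlt; apply/orP; left; apply/eqP; rewrite /s; field; exact: lt0r_neq0.
  - by move=> y z; exact: (proj2 (hbd y z)).
have V12 : Vset G x s `<=` Vset G x (2 * s).
  move=> y; rewrite /Vset /= => h; apply: (lt_le_trans h).
  by rewrite lee_fin; lra.
have t2r' : t / 2 < r'.
  lra.
have clV : forall sig, Vset G x sig `<=` mball rhot x (t / 2) ->
    mclosure rho (Vset G x sig) `<=` [set y | rhot x y <= t / 2].
  move=> sig hV y hy; apply: (mclosure_ball (r := rhot) x (t / 2) mrhot).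
  apply: (mclosure_compare (r := rho) (r' := rhot) _ mrhot (fun U => proj2 (hopen U))).
  exact: (mclosureS _ _ hV).
set A := mclosure rho (Vset G x s).
set U := mball rhot x t.
have UX0U : UX0 rho X0 U.
  split; first by apply/hopen; exact: mball_open.
  move=> y hy; apply: ballr'; rewrite /mball /=.
  have := mclosure_ball (r := rhot) x t mrhot y (mclosure_compare (r := rho) (r' := rhot) _ mrhot (fun U => proj2 (hopen U)) _ hy).
  by move=> /= h; apply: (le_lt_trans h); apply: le_lt_trans tr hrr'.
have Ux : U x by rewrite /U /mball /=; case: mrhot => _ r00 _ _; rewrite (proj2 (r00 x x)).
have Acl : mclosed rho A by apply: mclosure_closed.
have AU : A `<=` U.
  move=> y /(clV _ (subset_trans V12 V2)) /= h; rewrite /U /mball /=.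
  by apply: (le_lt_trans h); lra.
have sS0 : (s%:E < S0 rho G X0 x)%E.
  apply: (@lt_le_trans _ _ (2 * s)%:E); first by rewrite lte_fin; lra.
  apply: ereal_sup_ubound; exists (2 * s) => //; split; first by rewrite mulr_gt0.
  by move=> y /(clV _ V2) /= h; apply: ballr'; apply: le_lt_trans h t2r'.
have [B [nu [[Bcl AintB BU nuB _] pot]]] := HG1 U x 1 A UX0U Ux ltr01 Acl AU.
have ny0V : ~ Vset G x s y0.
  by move=> /V12 /V2 h; apply: ny0; apply: ballr'; apply: lt_trans t2r'.
have h3 := HG3 x s y0 hx s0 sS0 ny0V.
have h4 := proj1 (pot y0).
have ry0 : r <= rhot y0 x.
  by case: mrhot => _ _ rC _; rewrite rC; apply: le_trans (ltW hrr') hy0r.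
have rho0 : 0 < rhot y0 x by apply: lt_le_trans r0 ry0.
have [g hg] : exists g, G y0 x = g%:E.
  have := proj2 (hbd y0 x); rewrite /rpowneg gt_eqF // /Gt.
  have := G0 y0 x; case: (G y0 x) => [g _ _| |] //; first by exists g.
  have /andP[wy0 _] := w01 y0; have /andP[wx0 _] := w01 x.
  by rewrite gt0_mulye ?lte_fin ?invr_gt0 ?mulr_gt0 // leye_eq -EFinM.
have g0 : 0 < g by rewrite -lte_fin -hg.
have mB : @measurable _ (XB rho) B.
  by rewrite -(setCK B); apply: measurableC; apply: sub_sigma_algebra; exact: mclosed_openC.
have hpt : forall z, B z -> (G y0 z <= (ct * g / lam)%:E)%E.
  move=> z Bz.
  exact: (@Gyz_bound _ _ G w rhot gam C ct lam r t g x y0 z mrhot G0 w01 g1 C1 ct1 lam0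
    (Hlam x hx) Hct hbd r0 t0 hrt ry0 (BU z Bz) hg).
have h5 : (Gpot G nu y0 <= (ct * g / lam)%:E * nu setT)%E.
  rewrite /Gpot; apply: (ae_le_cst mB nuB (Gsec_meas _ _ _ _ y0 mG)) => //.
  - by move=> y; exact: ltW (G0 y0 y).
  - by rewrite ltW // divr_gt0 // mulr_gt0.
have fm : nu setT \is a fin_num by apply: fin_num_measure.
set m := fine (nu setT).
have hm : nu setT = m%:E by rewrite /m fineK.
have m0 : 0 <= m by rewrite -lee_fin -hm.
have hmb : lam * s / (c3 * ct) <= m.
  have := le_trans h3 (le_trans h4 h5); rewrite hg hm -!EFinM lee_fin => hh.
  rewrite ler_pdivrMr ?mulr_gt0 //.
  have hh' : c3^-1 * s * g * (c3 * lam / g) <= ct * g / lam * m * (c3 * lam / g).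
    by rewrite ler_pM2r // divr_gt0 ?mulr_gt0.
  have e1 : c3^-1 * s * g * (c3 * lam / g) = lam * s.
    by field; rewrite ?(gt_eqF c30) ?(gt_eqF g0) ?(gt_eqF lam0).
  have e2 : ct * g / lam * m * (c3 * lam / g) = m * (c3 * ct).
    by field; rewrite ?(gt_eqF c30) ?(gt_eqF g0) ?(gt_eqF lam0).
  by rewrite -e1 -e2.
have BX : B `<=` X0.
  move=> y By; apply: ballr'; rewrite /mball /=.
  have := BU y By; rewrite /U /mball /= => h; lra.
set a := lam ^+ 2 / c1.
have a0 : 0 <= a by rewrite divr_ge0 // ?exprn_ge0 // ltW.
pose nu' : {finite_measure set XB rho -> \bar R} := mscale (NngNum a0) nu.
rewrite /capt.
apply: (@le_trans _ _ (mass nu')); last first.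
  apply: ereal_sup_ubound; exists nu' => //; split.
  - rewrite /nu' /= /mscale /=.
    suff -> : nu (~` mball rhot x r) = 0%E by rewrite mule0.
    apply/eqP; rewrite eq_le measure_ge0 andbT -nuB; apply: le_measure; rewrite ?inE.
    + apply: measurableC; apply: sub_sigma_algebra; apply/hopen; exact: mball_open.
    + by apply: measurableC.
    + move=> y nb By; apply: nb; have := BU y By; rewrite /U /mball /= => h; lra.
  - move=> z; have mGt := Gt_meas _ _ _ _ _ z mG mw w0.
    rewrite ge0_integral_mscale //=; last first.
      by move=> y _; apply: Gt_ge0.
    have i1 : (\int[nu]_y Gt G w z y <= \int[nu]_y (G z y * ((w z * lam)^-1)%:E))%E.
      apply: (ae_le mB nuB (Gt_meas _ _ _ _ _ z mG mw w0)).
      + by apply: emeasurable_funM; [exact: Gsec_meas|exact: measurable_cst].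
      + by move=> y; apply: Gt_ge0.
      + by move=> y; apply: Gc_ge0 => //; rewrite invr_ge0 mulr_ge0 // ltW.
      + move=> y By; rewrite /Gt; apply: lee_wpmul2l; first exact: ltW.
        rewrite lee_fin lef_pV2 ?posrE ?mulr_gt0 //.
        by rewrite ler_pM2l //; apply: Hlam; apply: BX.
    have mGz := Gsec_meas _ _ _ _ z mG.
    have eZ : (\int[nu]_y (G z y * ((w z * lam)^-1)%:E) =
               (\int[nu]_y G z y) * ((w z * lam)^-1)%:E)%E.
      rewrite ge0_integralZr //.
      - by move=> y _; exact: ltW.
      - by rewrite lee_fin invr_ge0 mulr_ge0 // ltW.
    rewrite eZ in i1.
    have c1E : (0 <= c1%:E)%E by rewrite lee_fin ltW.
    have i2 := le_trans (proj2 (pot z)) (lee_wpmul2l c1E (@eps_mass_le _ _ _ mu w X0 lam B z kmu Bcl BX lam0 Hlam mw w0 wexc)).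
    have aE : (0 <= a%:E)%E by rewrite lee_fin.
    have cE : (0 <= ((w z * lam)^-1)%:E)%E by rewrite lee_fin invr_ge0 mulr_ge0 // ltW.
    apply: (le_trans (lee_wpmul2l aE i1)).
    apply: (le_trans (lee_wpmul2l aE (lee_wpmul2r cE i2))).
    rewrite -!EFinM lee_fin le_eqVlt; apply/orP; left; apply/eqP.
    rewrite /a; field.
    by rewrite ?(gt_eqF c10) ?(gt_eqF (w0 z)) ?(gt_eqF lam0).
rewrite /mass /nu' /= /mscale /= hm -EFinM lee_fin.
have dK : (Num.max 1 K0^-1)^-1 <= K0.
  rewrite -[leRHS](invrK K0) lef_pV2 ?posrE ?le_max ?lexx ?orbT //.
  - by rewrite (lt_le_trans ltr01) // le_max lexx.
  - by rewrite invr_gt0.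
apply: (@le_trans _ _ (K0 * r `^ gam)).
  by rewrite ler_pM2r ?powR_gt0.
apply: (le_trans _ (ler_wpM2l a0 hmb)).
have ht : t / 2 = kk * r by rewrite /t /kk mulrAC.
have hs : s = kk `^ gam * r `^ gam / (2 * C) by rewrite /s ht powRM // ltW.
rewrite hs /a /K0 le_eqVlt; apply/orP; left; apply/eqP.
field.
by rewrite ?(gt_eqF c10) ?(gt_eqF c30) ?(gt_eqF ct0) ?(gt_eqF C0) ?(gt_eqF lam0).
Qed.
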